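(* Let $A\in\mathbb{R}^{n\times n}$ be an adequate matrix that is group invertible. Then $A$ is a $P_{\#}$-matrix.
   Context: $R(A)$, $N(A)$ denote the range and null space of $A$. $A$ is group invertible if there is $X$ with $AXA=A$, $XAX=X$, $AX=XA$; equivalently $R(A)\cap N(A)=\{0\}$ (i.e. $\operatorname{rank}A=\operatorname{rank}A^2$). $A$ is called adequate if (1) all principal minors of $A$ are nonnegative, and (2) for every principal minor that vanishes, the associated rows of $A$ are linearly dependent and the associated columns of $A$ are linearly dependent. A matrix $A$ is a $P_{\#}$-matrix if: $x\in R(A)$ and $x_i(Ax)_i\le 0$ for all $i$ imply $x=0$. *)

(* Defs.v *)
From HB Require Import structures.
From mathcomp Require Import all_boot all_order all_algebra.
From mathcomp Require Import Rstruct.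
Set Implicit Arguments. Unset Strict Implicit. Unset Printing Implicit Defensive.
Import Order.TTheory GRing.Theory Num.Theory.
Local Open Scope ring_scope.

Section Defs.
Variable R : realFieldType.
Variable n : nat.

Definition principal_submx (A : 'M[R]_n) (S : {set 'I_n}) : 'M[R]_#|S| :=
  \matrix_(i < #|S|, j < #|S|) A (enum_val i) (enum_val j).

Definition principal_minor (A : 'M[R]_n) (S : {set 'I_n}) : R :=
  \det (principal_submx A S).

Definition rows_of (A : 'M[R]_n) (S : {set 'I_n}) : 'M[R]_(#|S|, n) :=
  \matrix_(i < #|S|, j < n) A (enum_val i) j.
Definition cols_of (A : 'M[R]_n) (S : {set 'I_n}) : 'M[R]_(n, #|S|) :=
  \matrix_(i < n, j < #|S|) A i (enum_val j).

Definition adequate (A : 'M[R]_n) : Prop :=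
  forall S : {set 'I_n}, S != set0 ->
    0 <= principal_minor A S /\
    (principal_minor A S = 0 ->
       ~~ row_free (rows_of A S) /\ ~~ row_free (trmx (cols_of A S))).

Definition group_invertible (A : 'M[R]_n) : Prop :=
  exists X : 'M[R]_n, A *m X *m A = A /\ X *m A *m X = X /\ A *m X = X *m A.

Definition in_range (A : 'M[R]_n) (x : 'cV[R]_n) : Prop :=
  exists y : 'cV[R]_n, x = A *m y.

Definition P_sharp (A : 'M[R]_n) : Prop :=
  forall x : 'cV[R]_n, in_range A x ->
    (forall i : 'I_n, x i 0 * (A *m x) i 0 <= 0) -> x = 0.
End Defs.

(* Main.v *)
Require Import Defs.
From HB Require Import structures.
From mathcomp Require Import all_boot all_order all_algebra.
From mathcomp Require Import Rstruct.
From mathcomp Require Import ring lra.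
Set Implicit Arguments. Unset Strict Implicit. Unset Printing Implicit Defensive.
Import Order.TTheory GRing.Theory Num.Theory.
Local Open Scope ring_scope.

Lemma det_cast_eq (R : comNzRingType) m1 m2 (e : m1 = m2) (M : 'M[R]_m1) (N : 'M[R]_m2) :
  (forall i j, M i j = N (cast_ord e i) (cast_ord e j)) -> \det M = \det N.
Proof.
case: m2 / e N => N H; congr (\det _); apply/matrixP => i j; rewrite H !cast_ord_id.
by [].
Qed.

Lemma enum_setD1 n (T : {set 'I_n}) k : enum (T :\ k) = rem k (enum T).
Proof.
rewrite rem_filter ?enum_uniq // /enum_mem -filter_predI; apply: eq_filter => x.
by rewrite /= in_setD1.
Qed.

Lemma enum_val_setD1 n (T : {set 'I_n}) k (kT : k \in T)
   (e : #|T :\ k| = #|T|.-1) (i : 'I_#|T :\ k|) :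
  enum_val i = enum_val (lift (enum_rank_in kT k) (cast_ord e i)).
Proof.
rewrite (enum_val_nth k) (enum_val_nth k) enum_setD1 remE /=.
have Hr : index k (enum T) = enum_rank_in kT k.
  rewrite -[X in index X _](nth_enum_rank_in k kT kT) // index_uniq ?enum_uniq //.
  by rewrite -cardE ltn_ord.
rewrite Hr /bump /=; case: ltnP => hi.
  have hr : (enum_rank_in kT k < size (enum T))%N by rewrite -cardE ltn_ord.
  by rewrite nth_cat size_take hr hi nth_take.
have hr : (enum_rank_in kT k < size (enum T))%N by rewrite -cardE ltn_ord.
rewrite nth_cat size_take hr ltnNge hi /= nth_drop add1n; congr nth.
by rewrite addSn subnKC.
Qed.

Lemma enum_val_eq_rank n (T : {set 'I_n}) k (kT : k \in T) (i : 'I_#|T|) :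
  (enum_val i == k) = (i == enum_rank_in kT k).
Proof.
apply/eqP/eqP => [H|->]; last by rewrite enum_rankK_in.
by rewrite -(enum_valK_in kT i) H.
Qed.

Lemma minor_update (R : realFieldType) n (A : 'M[R]_n) (T : {set 'I_n}) k
  (kT : k \in T) (d : R) :
  principal_minor (A + d *: delta_mx k k) T =
  principal_minor A T + d * principal_minor A (T :\ k).
Proof.
set r := enum_rank_in kT k.
set P := principal_submx A T.
have E : principal_submx (A + d *: delta_mx k k) T = P + d *: delta_mx r r.
  apply/matrixP => i j; rewrite !mxE !enum_val_eq_rank.
  by [].
rewrite /principal_minor E (expand_det_row _ r).
have Hc : forall j, cofactor (P + d *: delta_mx r r) r j = cofactor P r j.
  move=> j; rewrite /cofactor; congr (_ * \det _); apply/matrixP => a b.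
  by rewrite !mxE eq_sym (negbTE (neq_lift r a)) andFb mulr0 addr0.
under eq_bigr => j _ do rewrite Hc !mxE eqxx andTb mulrDl.
rewrite big_split /= -/P; congr (_ + _).
  by rewrite (expand_det_row P r); apply: eq_bigr => j _; rewrite mxE.
rewrite (bigD1 r) //= eqxx mulr1 big1 ?addr0; last first.
  by move=> j /negbTE ->; rewrite mulr0 mul0r.
rewrite /cofactor exprD -expr2 sqrr_sign mul1r -/P.
have e : #|T :\ k| = #|T|.-1 by rewrite (cardsD1 k T) kT.
congr (_ * _); symmetry; have := @det_cast_eq R _ _ e (principal_submx A (T :\ k)) (row' r (col' r P)).
apply => i j; rewrite !mxE (enum_val_setD1 kT e i) (enum_val_setD1 kT e j).
by [].
Qed.

Lemma minor_eq (R : realFieldType) n (A B : 'M[R]_n) (T : {set 'I_n}) :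
  (forall i j, i \in T -> j \in T -> A i j = B i j) ->
  principal_minor A T = principal_minor B T.
Proof.
move=> H; rewrite /principal_minor; congr (\det _); apply/matrixP => i j.
by rewrite !mxE H // enum_valP.
Qed.

Lemma pos_diag (R : realFieldType) n (S : {set 'I_n}) m :
  forall (A : 'M[R]_n) (d : 'I_n -> R),
  (#|[set i in S | d i != 0%R]| <= m)%N ->
  (forall i, 0 <= d i) ->
  (forall T : {set 'I_n}, T \subset S -> 0 < principal_minor A T) ->
  0 < principal_minor (A + diag_mx (\row_i d i)) S.
Proof.
elim: m => [|m IH] A d Hc Hd HA.
  rewrite leqn0 cards_eq0 in Hc.
  rewrite (@minor_eq _ _ _ A) ?HA // => i j iS jS.
  rewrite !mxE; have : i \notin [set i in S | d i != 0%R] by rewrite (eqP Hc) in_set0.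
  by rewrite inE iS /= negbK => /eqP ->; rewrite mul0rn addr0.
case: (set_0Vmem [set i in S | d i != 0%R]) => [H0|[k]].
  by apply: IH => //; rewrite H0 cards0.
rewrite inE => /andP[kS dk].
set A' := A + d k *: delta_mx k k.
set d' := fun i => if i == k then 0 else d i.
have -> : A + diag_mx (\row_i d i) = A' + diag_mx (\row_i d' i).
  apply/matrixP => i j; rewrite !mxE /d'.
  case: (eqVneq i k) => [->|ik]; case: (eqVneq j k) => [->|jk] //=.
  1-4: by rewrite ?mulr1n ?mulr0n ?mulr1 ?mulr0 ?addr0.
apply: (IH A' d').
- rewrite -ltnS (leq_trans _ Hc) // (cardsD1 k [set i in S | d i != 0%R]) inE kS dk /=.
  rewrite add1n ltnS subset_leq_card //; apply/subsetP => i; rewrite !inE /d'.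
  case: (eqVneq i k) => [->|ik] /=; first by rewrite eqxx andbF.
  by [].
- by move=> i; rewrite /d'; case: (i == k).
move=> T TS; case: (boolP (k \in T)) => kT.
  rewrite /A' (minor_update _ kT); apply: addr_gt0; first by apply: HA.
  apply: mulr_gt0; first by rewrite lt_def dk Hd.
  by apply: HA; apply: subset_trans TS; apply: subD1set.
rewrite (@minor_eq _ _ _ A) ?HA // => i j iT jT.
rewrite !mxE; have : i != k by apply: contraNneq kT => <-.
by move/negbTE ->; rewrite andFb mulr0 addr0.
Qed.

Lemma singular_minor (R : realFieldType) n (M : 'M[R]_n) (x : 'cV[R]_n) :
  x != 0 -> (forall i, x i 0 != 0 -> (M *m x) i 0 = 0) ->
  principal_minor M [set j | x j 0 != 0] = 0.
Proof.
move=> xn0 Hx; set S := [set j | x j 0 != 0].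
apply/eqP; rewrite /principal_minor -det_tr; apply/det0P.
exists (\row_s x (enum_val s) 0).
  have [j xj] : exists j, x j 0 != 0.
    apply/existsP; move: xn0; apply: contraR; rewrite negb_exists => /forallP H.
    apply/eqP/matrixP => i j; rewrite ord1 mxE; move: (H i); by rewrite negbK => /eqP.
  have jS : j \in S by rewrite inE.
  apply/eqP => /matrixP /(_ 0 (enum_rank_in jS j)); rewrite !mxE enum_rankK_in //.
  by move/eqP; rewrite (negbTE xj).
apply/matrixP => z i; rewrite ord1 !mxE.
have iS := enum_valP i; rewrite inE in iS.
transitivity ((M *m x) (enum_val i) 0); last exact: Hx.
rewrite mxE.
under eq_bigr => s _ do rewrite !mxE mulrC.
rewrite -(big_enum_val (fun j => M (enum_val i) j * x j 0)) /=.
rewrite [RHS](bigID (fun j => j \in S)) /= [X in _ = _ + X]big1 ?addr0.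
  by apply: eq_bigl => j.
by move=> j; rewrite inE negbK => /eqP ->; rewrite mulr0.
Qed.

Lemma coldep (R : realFieldType) n (A : 'M[R]_n) (G : {set 'I_n}) :
  ~~ row_free (trmx (cols_of A G)) ->
  exists2 z : 'cV[R]_n, z != 0 & (A *m z = 0 /\ forall j, z j 0 != 0 -> j \in G).
Proof.
rewrite -kermx_eq0 => /rowV0Pn [v /sub_kermxP vK /rV0Pn [s0 vs0]].
exists (\col_j \sum_(s < #|G|) (enum_val s == j)%:R * v 0 s).
  apply/cV0Pn; exists (enum_val s0); rewrite mxE (bigD1 s0) //= eqxx mul1r big1 ?addr0 //.
  by move=> s ss0; rewrite (inj_eq enum_val_inj) (negbTE ss0) mul0r.
split.
  apply/matrixP => i k; rewrite ord1 !mxE.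
  under eq_bigr => j _ do rewrite mxE big_distrr.
  rewrite exchange_big /=.
  transitivity ((v *m (cols_of A G)^T) 0 i); last by rewrite vK mxE.
  rewrite mxE; apply: eq_bigr => s _; rewrite (bigD1 (enum_val s)) //= eqxx mul1r big1 ?addr0.
    by rewrite !mxE mulrC.
  by move=> j /negbTE; rewrite eq_sym => ->; rewrite mul0r mulr0.
move=> j; rewrite mxE; apply: contraR => jG; rewrite big1 // => s _.
have : enum_val s != j by apply: contraNneq jG => <-; apply: enum_valP.
by move/negbTE ->; rewrite mul0r.
Qed.

Lemma absq (R : realFieldType) (a b : R) : `|b| <= `|a| -> 0 <= a * (a + b).
Proof. case: (ler0P a) => ha; case: (ler0P b) => hb; nra. Qed.

Lemma reduce (R : realFieldType) n (x z : 'cV[R]_n) :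
  z != 0 -> (forall j, z j 0 != 0 -> x j 0 != 0) ->
  exists t : R,
    [/\ forall j, 0 <= x j 0 * (x + t *: z) j 0,
        forall j, x j 0 = 0 -> (x + t *: z) j 0 = 0 &
        exists j, x j 0 != 0 /\ (x + t *: z) j 0 = 0].
Proof.
move=> /cV0Pn [j0 zj0] Hs.
pose P := fun j : 'I_n => z j 0 != 0.
pose F := fun j : 'I_n => `|x j 0 / z j 0|.
have [j1 Pj1 Hmin] := @arg_minP _ _ 'I_n j0 P F zj0.
exists (- (x j1 0 / z j1 0)); split.
- move=> j; rewrite !mxE; case: (eqVneq (z j 0) 0) => [->|zj].
    by rewrite mulr0 addr0 -expr2 sqr_ge0.
  apply: absq; rewrite normrM normrN.
  have := Hmin j zj; rewrite /F => H.
  apply: (le_trans (ler_wpM2r (normr_ge0 _) H)).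
  by rewrite -normrM mulfVK.
- move=> j xj; rewrite !mxE xj add0r.
  case: (eqVneq (z j 0) 0) => [->|zj]; first by rewrite mulr0.
  by move: (Hs _ zj); rewrite xj eqxx.
- exists j1; split; first exact: Hs.
  by rewrite !mxE mulNr mulfVK // subrr.
Qed.

Lemma sign_aux (R : realFieldType) (a b c : R) :
  0 <= a * b -> a * c <= 0 -> (a = 0 -> b = 0) -> b * c <= 0.
Proof.
move=> h1 h2 h3; case: (eqVneq a 0) => [/h3 ->|ha]; first by rewrite mul0r.
have a2 : 0 < a * a by rewrite -expr2 lt_def sqr_ge0 andbT expf_neq0.
have : (a * a) * (b * c) <= 0.
  by rewrite mulrACA; apply: mulr_ge0_le0.
by rewrite pmulr_rle0.
Qed.

Lemma d_aux (R : realFieldType) (a b : R) : a != 0 -> a * b <= 0 -> 0 <= - b / a.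
Proof.
move=> ha hab; have -> : - b / a = - (a * b) / (a * a) by field.
by apply: divr_ge0; [rewrite oppr_ge0 | rewrite -expr2 sqr_ge0].
Qed.

Lemma minor_set0 (R : realFieldType) n (A : 'M[R]_n) : principal_minor A set0 = 1.
Proof.
have e : #|@set0 'I_n| = 0%N by rewrite cards0.
rewrite /principal_minor -(det1 _ 0).
have := @det_cast_eq R _ _ e (principal_submx A set0) 1%:M; apply => i.
by case: (cast_ord e i).
Qed.

Lemma exists_zero_minor (R : realFieldType) n (A : 'M[R]_n) (x : 'cV[R]_n) :
  adequate A -> x != 0 -> (forall i, x i 0 * (A *m x) i 0 <= 0) ->
  exists G : {set 'I_n}, [/\ G != set0, G \subset [set j | x j 0 != 0] &
     principal_minor A G = 0].
Proof.
move=> HA xn0 Hx; set S := [set j | x j 0 != 0].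
case: (boolP [exists G : {set 'I_n}, [&& G != set0, G \subset S &
     principal_minor A G == 0]]).
  by move=> /existsP [G /and3P [G0 GS /eqP GA]]; exists G.
rewrite negb_exists => /forallP Hno; exfalso.
have Hpos : forall T : {set 'I_n}, T \subset S -> 0 < principal_minor A T.
  move=> T TS; case: (eqVneq T set0) => [->|T0]; first by rewrite minor_set0 ltr01.
  have [h1 _] := HA T T0; rewrite lt_def h1 andbT.
  by move: (Hno T); rewrite T0 TS.
pose d := fun j : 'I_n => if x j 0 != 0 then - (A *m x) j 0 / x j 0 else 0.
have Hd : forall j, 0 <= d j.
  by move=> j; rewrite /d; case: ifP => // xj; apply: d_aux.
have := pos_diag (leqnn _) Hd Hpos.
rewrite singular_minor ?ltxx //.
move=> i xi; rewrite mulmxDl mul_diag_mx !mxE /d xi.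
rewrite mulfVK //; have -> : \sum_j A i j * x j 0 = (A *m x) i 0 by rewrite mxE.
by rewrite addrN.
Qed.

Lemma col_adequate (R : realFieldType) n (A : 'M[R]_n) : adequate A ->
  forall x : 'cV[R]_n, (forall i, x i 0 * (A *m x) i 0 <= 0) -> A *m x = 0.
Proof.
move=> HA x.
have [m Hm] : exists m, (#|[set j | x j ord0 != 0%R]| < m)%N by exists #|[set j | x j ord0 != 0%R]|.+1.
elim: m x Hm => [|m IH] x Hm Hx; first by [].
case: (eqVneq x 0) => [->|xn0]; first by rewrite mulmx0.
have [G [G0 GS GA]] := exists_zero_minor HA xn0 Hx.
have [_ /(_ GA) [_ Hcol]] := HA G G0.
have [z zn0 [Az zG]] := coldep Hcol.
have zx : forall j, z j 0 != 0 -> x j 0 != 0.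
  by move=> j /zG jG; move/subsetP: GS => /(_ j jG); rewrite inE.
have [t [H1 H2 [j [xj x'j]]]] := reduce zn0 zx.
have AE : A *m (x + t *: z) = A *m x by rewrite mulmxDr -scalemxAr Az scaler0 addr0.
rewrite -AE; apply: IH; last first.
  move=> i; rewrite AE; apply: (sign_aux (H1 i) (Hx i)); exact: H2.
rewrite -ltnS (leq_trans _ Hm) // ltnS proper_card //; apply/properP; split.
  by apply/subsetP => i; rewrite !inE; apply: contra_neq; exact: H2.
by exists j; rewrite !inE ?x'j ?eqxx.
Qed.

From Stdlib Require Import Reals.

Theorem mainTheorem3 (n : nat) (A : 'M[R]_n) :
  adequate A -> group_invertible A -> P_sharp A.
Proof.
move=> HA [X [h1 [h2 h3]]] x [y ->] Hs.
have Ax0 := col_adequate HA Hs.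
by rewrite -[in LHS]h1 h3 -!mulmxA Ax0 !mulmx0.
Qed.
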